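(* Let $V$ be a finite-dimensional real vector space and $X\subseteq V$ a finite or countable set in which every $2$-dimensional linear subset has fundamental vectors, equipped with a suitable ordering. Then the subsets of $X$ that are biclosed in $X$ form a complete lattice under containment. More specifically, for any collection $\mathcal{X}$ of biclosed subsets of $X$, \[\bigvee_{Y\in\mathcal{X}}Y=\overline{\bigcup_{Y\in\mathcal{X}}Y},\qquad \bigwedge_{Y\in\mathcal{X}}Y=\Big(\bigcap_{Y\in\mathcal{X}}Y\Big)^{\circ}.\]
   Context: $\mathrm{Span}_+$ denotes nonnegative linear combinations. For $Y\subseteq X$, $B\subseteq Y$: closed in $Y$ if $\alpha,\beta\in B$, $\gamma\in\mathrm{Span}_+(\alpha,\beta)\cap Y$ imply $\gamma\in B$; coclosed if $Y\setminus B$ closed; biclosed if both; weakly separable if $\mathrm{Span}_+(B)\cap\mathrm{Span}_+(Y\setminus B)=\{0\}$; $Y$ is clean if every biclosed subset of $Y$ is weakly separable in $Y$. $\overline{A}$ denotes the closure of $A$ in $X$ (smallest closed subset of $X$ containing $A$) and $A^\circ=X\setminus\overline{X\setminus A}$ the interior (largest coclosed subset of $X$ contained in $A$). A linear subset is $X\cap L$ for a subspace $L$. A $2$-dimensional linear subset $Y$ has fundamental vectors $\alpha,\beta\in Y$ if $Y\subseteq\mathrm{Span}_+\{\alpha,\beta\}$ and neither $\alpha$ nor $\beta$ lies in the nonnegative span of the other elements of $Y$. $F\subseteq X$ is full if $F\cap\mathrm{Span}\{\alpha,\beta\}=X\cap\mathrm{Span}\{\alpha,\beta\}$ for all $\alpha,\beta\in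 F$. An ordering $\gamma_1,\gamma_2,\ldots$ of $X$ with initial segments $X_i=\{\gamma_1,\dots,\gamma_i\}$ is suitable if (1) in every $2$-dimensional linear subset the fundamental vectors precede all its other vectors, and (2) for every $i$ and $\alpha,\beta,\gamma\in X_i$ there is a full $F\subseteq X$ containing them with $F\cap X_i$ clean. *)

(* Defs.v *)
From HB Require Import structures.
From mathcomp Require Import all_boot all_order all_algebra.
From mathcomp Require Import boolp classical_sets reals.
Set Implicit Arguments. Unset Strict Implicit. Unset Printing Implicit Defensive.
Import Order.TTheory GRing.Theory Num.Theory.
Local Open Scope classical_set_scope.
Local Open Scope ring_scope.

Section Defs.
Variables (R : realType) (n : nat).
Local Notation V := 'rV[R]_n.

Definition nspan (S : set V) : set V :=
  [set v | exists (k : nat) (a : 'I_k -> V) (c : 'I_k -> R),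
     (forall i, S (a i)) /\ (forall i, 0 <= c i) /\ v = \sum_(i < k) c i *: a i].

Definition closed_in (Y B : set V) : Prop :=
  forall a b g, B a -> B b -> nspan [set a; b] g -> Y g -> B g.

Definition coclosed_in (Y B : set V) : Prop := closed_in Y (Y `\` B).

Definition biclosed_in (Y B : set V) : Prop :=
  B `<=` Y /\ closed_in Y B /\ coclosed_in Y B.

Definition weakly_separable (Y B : set V) : Prop :=
  nspan B `&` nspan (Y `\` B) = [set 0].

Definition clean (Y : set V) : Prop :=
  forall B, biclosed_in Y B -> weakly_separable Y B.

Definition closure_in (X A : set V) : set V :=
  \bigcap_(C in [set C | C `<=` X /\ A `<=` C /\ closed_in X C]) C.

Definition interior_in (X A : set V) : set V := X `\` closure_in X (X `\` A).

Definition two_dim_linear_subset (X Y : set V) : Prop :=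
  exists L : {vspace V}, (\dim L = 2)%N /\
    Y = X `&` [set v | v \in L] /\
    exists a b, Y a /\ Y b /\ free [:: a; b].

Definition fundamental (Y : set V) (a b : V) : Prop :=
  Y a /\ Y b /\ Y `<=` nspan [set a; b] /\
  ~ nspan (Y `\ a) a /\ ~ nspan (Y `\ b) b.

Definition full (X F : set V) : Prop :=
  forall a b, F a -> F b ->
    F `&` [set v | v \in <<[:: a; b]>>%VS] = X `&` [set v | v \in <<[:: a; b]>>%VS].

(* An ordering gamma_0, gamma_1, ... of X: e enumerates X injectively on the
   index set D, which is either all of nat (X infinite) or {0,...,N-1}. *)
Definition enumeration (X : set V) (e : nat -> V) (D : set nat) : Prop :=
  (D = setT \/ exists N : nat, D = [set i | (i < N)%N]) /\
  (forall i j, D i -> D j -> e i = e j -> i = j) /\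
  e @` D = X.

Definition init_seg (e : nat -> V) (D : set nat) (i : nat) : set V :=
  [set v | exists j, D j /\ (j < i)%N /\ v = e j].

Definition suitable (X : set V) (e : nat -> V) (D : set nat) : Prop :=
  (forall Y a b, two_dim_linear_subset X Y -> fundamental Y a b ->
     forall j k, D j -> D k -> (e j = a \/ e j = b) ->
       Y (e k) -> e k <> a -> e k <> b -> (j < k)%N) /\
  (forall i a b c, init_seg e D i a -> init_seg e D i b -> init_seg e D i c ->
     exists F, F `<=` X /\ full X F /\ F a /\ F b /\ F c /\
       clean (F `&` init_seg e D i)).

End Defs.

(* Main.v *)
Require Import Defs.
From HB Require Import structures.
From mathcomp Require Import all_boot all_order all_algebra.
From mathcomp Require Import boolp classical_sets reals.
From mathcomp Require Import ring lra.
Set Implicit Arguments. Unset Strict Implicit. Unset Printing Implicit Defensive.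
Import Order.TTheory GRing.Theory Num.Theory.
Local Open Scope classical_set_scope.
Local Open Scope ring_scope.
Section Aux.
Variables (R : realType) (n : nat).
Local Notation V := 'rV[R]_n.

Lemma nspan_mono (S T : set V) : S `<=` T -> nspan S `<=` nspan T.
Proof.
move=> ST v [k [a [c [Sa [c0 ->]]]]]; exists k, a, c; split=> // i; exact: ST.
Qed.

Lemma nspan2P (a b v : V) : nspan [set a; b] v <->
  exists p q, 0 <= p /\ 0 <= q /\ v = p *: a + q *: b.
Proof.
split.
  move=> [k [f [c [Sf [c0 ->]]]]]; elim: k f c Sf c0 => [|k IH] f c Sf c0.
    by exists 0, 0; rewrite big_ord0 !scale0r addr0.
  rewrite big_ord_recr /=.
  have [p [q [p0 [q0 ->]]]] := IH (fun i => f (widen_ord (leqnSn k) i))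
    (fun i => c (widen_ord (leqnSn k) i)) (fun i => Sf _) (fun i => c0 _).
  case: (Sf ord_max) => ->.
    exists (p + c ord_max), q; split; first by rewrite addr_ge0.
    by split=> //; rewrite scalerDl addrAC.
  exists p, (q + c ord_max); split=> //; split; first by rewrite addr_ge0.
  by rewrite scalerDl addrA.
move=> [p [q [p0 [q0 ->]]]].
exists 2%N, (fun i : 'I_2 => if i == ord0 then a else b),
  (fun i : 'I_2 => if i == ord0 then p else q); split.
  by move=> i; case: ifP => _; [left|right].
split; first by move=> i; case: ifP.
by rewrite big_ord_recr big_ord1 /=.
Qed.

Lemma nspan2C (a b v : V) : nspan [set a; b] v -> nspan [set b; a] v.
Proof.
move=> /nspan2P [p [q [p0 [q0 ->]]]]; apply/nspan2P; exists q, p.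
by do 2!split=> //; rewrite addrC.
Qed.

Lemma nspan2_sub (S : set V) a b v : S a -> S b -> nspan [set a; b] v -> nspan S v.
Proof. by move=> Sa Sb; apply: nspan_mono => x [->|->]. Qed.

Lemma nspan11 (a : V) r : 0 <= r -> nspan [set a; a] (r *: a).
Proof. by move=> r0; apply/nspan2P; exists r, 0; rewrite scale0r addr0. Qed.

Lemma nspan2_scale (a b v : V) r : 0 <= r -> nspan [set a; b] v ->
  nspan [set a; b] (r *: v).
Proof.
move=> r0 /nspan2P [p [q [p0 [q0 ->]]]]; apply/nspan2P.
exists (r * p), (r * q); rewrite !mulr_ge0 //.
by do 2!split=> //; rewrite scalerDr !scalerA.
Qed.

Lemma nspan11_inv (a g : V) : nspan [set a; a] g -> g != 0 ->
  nspan [set g; g] a.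
Proof.
move=> /nspan2P [p [q [p0 [q0 ->]]]]; rewrite -scalerDl => nz.
have pq : p + q != 0 by apply: contraNneq nz => ->; rewrite scale0r.
set g0 := (p + q) *: a.
have ea : a = (p + q)^-1 *: g0 by rewrite /g0 scalerA mulVf // scale1r.
rewrite [X in nspan _ X]ea; apply: nspan11.
by rewrite invr_ge0 addr_ge0.
Qed.

Lemma lin_vv (phi psi : V) s t u1 u2 w1 w2 :
  s *: (u1 *: phi + u2 *: psi) + t *: (w1 *: phi + w2 *: psi) =
  (s * u1 + t * w1) *: phi + (s * u2 + t * w2) *: psi.
Proof.
rewrite !scalerDr !scalerA !scalerDl; rewrite -!addrA; congr (_ + _).
by rewrite addrC -!addrA; congr (_ + _); rewrite addrC.
Qed.

Lemma coneG (phi psi u w : V) s t :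
  nspan [set phi; psi] u -> nspan [set phi; psi] w -> 0 <= s -> 0 <= t ->
  nspan [set phi; s *: u + t *: w] u \/ nspan [set w; psi] (s *: u + t *: w).
Proof.
move=> /nspan2P [u1 [u2 [hu1 [hu2 ->]]]] /nspan2P [w1 [w2 [hw1 [hw2 ->]]]] hs ht.
have [->|s0] := eqVneq s 0.
  right; apply/nspan2P; exists t, 0; do 2!split=> //.
  by rewrite !scale0r add0r addr0.
have [->|t0] := eqVneq t 0.
  left; apply/nspan2P; exists 0, s^-1; do 2!split=> //; first by rewrite invr_ge0.
  by rewrite scale0r add0r !scale0r addr0 scalerA mulVf // scale1r.
have sp : 0 < s by rewrite lt_def s0.
have tp : 0 < t by rewrite lt_def t0.
rewrite lin_vv.
set v1 := s * u1 + t * w1; set v2 := s * u2 + t * w2.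
have [Dp|Dn] := leP 0 (u1 * w2 - u2 * w1).
  left; apply/nspan2P.
  have [v20|v2p] := eqVneq v2 0.
    have u20 : u2 = 0.
      apply/eqP; rewrite eq_le hu2 andbT.
      have : s * u2 <= 0 by rewrite -v20 /v2 lerDl mulr_ge0.
      by rewrite pmulr_rle0.
    exists u1, 0; do 2!split=> //; by rewrite u20 !scale0r addr0.
  have v2pos : 0 < v2 by rewrite lt_def v2p /v2 addr_ge0 // mulr_ge0.
  exists (t * (u1 * w2 - u2 * w1) / v2), (u2 / v2); split.
    by rewrite divr_ge0 // ?mulr_ge0 // ltW.
  split; first by rewrite divr_ge0 // ltW.
  rewrite scalerDr !scalerA addrA -scalerDl; congr (_ *: _ + _ *: _).
    rewrite /v1 /v2 in v2p *; field; exact: v2p.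
  rewrite /v2 in v2p *; field; exact: v2p.
right; apply/nspan2P.
have [w10|w1p] := eqVneq w1 0.
  by move: Dn; rewrite w10 mulr0 subr0 ltNge mulr_ge0.
have w1pos : 0 < w1 by rewrite lt_def w1p.
exists (v1 / w1), (s * (w1 * u2 - w2 * u1) / w1); split.
  apply: divr_ge0; last exact: ltW.
  by rewrite /v1 addr_ge0 // mulr_ge0.
split.
  apply: divr_ge0; last exact: ltW.
  apply: mulr_ge0; [exact: ltW | lra].
rewrite scalerDr !scalerA -addrA -scalerDl; congr (_ *: _ + _ *: _).
  rewrite /v1; field; exact: w1p.
rewrite /v2 /v1; field; exact: w1p.
Qed.

Lemma depcase (y gam : V) k s t : 0 <= s -> 0 <= t -> gam = k *: y ->
  s *: gam + t *: y != 0 ->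
  (nspan [set y; y] (s *: gam + t *: y) /\ nspan [set s *: gam + t *: y; s *: gam + t *: y] y) \/
  (nspan [set gam; gam] (s *: gam + t *: y) /\ nspan [set s *: gam + t *: y; s *: gam + t *: y] gam).
Proof.
move=> s0 t0 -> nz.
have E : s *: (k *: y) + t *: y = (s * k + t) *: y by rewrite scalerA scalerDl.
rewrite E in nz *.
have [r0|rn] := leP 0 (s * k + t).
  left; split; first exact: nspan11.
  by apply: nspan11_inv => //; exact: nspan11.
have kn : k < 0.
  rewrite ltNge; apply/negP => k0.
  by move: rn; rewrite ltNge addr_ge0 // mulr_ge0.
have kn0 : k != 0 by rewrite lt_eqF.
have ee : (s * k + t) *: y = ((s * k + t) / k) *: (k *: y).
  by rewrite scalerA divfK.
have c0 : 0 <= (s * k + t) / k by rewrite ler_ndivlMr // mul0r ltW.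
right; split.
  by rewrite ee; apply: nspan11.
by apply: nspan11_inv => //; rewrite ee; apply: nspan11.
Qed.
End Aux.
Section Aux2.
Variables (R : realType) (n : nat).
Local Notation V := 'rV[R]_n.
Implicit Types (X U C B Y : set V).

Lemma cl_closed X U : closed_in X (closure_in X U).
Proof.
move=> a b g Ha Hb Hg Xg C [CX [UC cC]].
exact: (cC a b g (Ha C (conj CX (conj UC cC))) (Hb C (conj CX (conj UC cC)))).
Qed.

Lemma cl_sub X U : U `<=` X -> closure_in X U `<=` X.
Proof. by move=> UX v Hv; apply: Hv; split=> //; split=> // a b g _ _ _. Qed.

Lemma cl_ext X U : U `<=` closure_in X U.
Proof. by move=> v Uv C [_ [UC _]]; exact: UC. Qed.

Lemma cl_min X U C : C `<=` X -> U `<=` C -> closed_in X C -> closure_in X U `<=` C.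
Proof. by move=> CX UC cC v Hv; apply: Hv. Qed.

Lemma bic_restrict Y Y' B : biclosed_in Y B -> Y' `<=` Y -> biclosed_in Y' (B `&` Y').
Proof.
move=> [BY [cB ccB]] sY; split; first by move=> v [].
split.
  move=> a b g [Ba _] [Bb _] Hg Y'g; split=> //; exact: (cB a b g Ba Bb Hg (sY _ Y'g)).
move=> a b g [Y'a Na] [Y'b Nb] Hg Y'g; split=> // -[Bg _].
have Ba : ~ B a by move=> Ba; apply: Na.
have Bb : ~ B b by move=> Bb; apply: Nb.
by have [_] := ccB a b g (conj (sY _ Y'a) Ba) (conj (sY _ Y'b) Bb) Hg (sY _ Y'g).
Qed.

Lemma bic_compl Y B : biclosed_in Y B -> biclosed_in Y (Y `\` B).
Proof.
move=> [BY [cB ccB]]; split; first by move=> v [].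
split; first exact: ccB.
move=> a b g [Ya Na] [Yb Nb] Hg Yg; split=> // -[_ NBg].
have Ba : B a by apply: contrapT => H; apply: Na.
have Bb : B b by apply: contrapT => H; apply: Nb.
exact: NBg (cB a b g Ba Bb Hg Yg).
Qed.

End Aux2.
Section Main.
Variables (R : realType) (n : nat).
Local Notation V := 'rV[R]_n.
Variables (X : set V) (e : nat -> V) (D : set nat).
Hypothesis enumX : enumeration X e D.
Hypothesis fundX : forall Y, two_dim_linear_subset X Y -> exists a b, fundamental Y a b.
Hypothesis suitX : suitable X e D.
Hypothesis X0 : ~ X 0.
Variable U : set V.
Hypothesis HU : forall u, U u -> exists Y, biclosed_in X Y /\ Y u /\ Y `<=` U.

Local Notation W := (init_seg e D).

Lemma Xe v : X v -> exists j, D j /\ e j = v.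
Proof. by case: enumX => _ [_ img]; rewrite -img => -[j Dj <-]; exists j. Qed.

Lemma eX j : D j -> X (e j).
Proof. by case: enumX => _ [_ <-] Dj; exists j. Qed.

Lemma WX i : W i `<=` X.
Proof. by move=> v [j [Dj [_ ->]]]; exact: eX. Qed.

Lemma WS i v : W i.+1 v <-> W i v \/ (D i /\ v = e i).
Proof.
split.
  move=> [j [Dj [ji ->]]]; rewrite ltnS leq_eqVlt in ji.
  case/orP: ji => [/eqP eji|ji]; first by right; rewrite -eji.
  by left; exists j.
case=> [[j [Dj [ji ->]]]|[Di ->]]; first by exists j; split=> //; split=> //; exact: ltnW.
by exists i.
Qed.

Lemma eW i : D i -> ~ W i (e i).
Proof.
move=> Di [j [Dj [ji eij]]]; case: enumX => _ [inj _].
by have := inj _ _ Di Dj eij => ij; rewrite ij ltnn in ji.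
Qed.

Lemma Wmono i j : (i <= j)%N -> W i `<=` W j.
Proof. by move=> ij v [k [Dk [ki ->]]]; exists k; split=> //; split=> //; exact: leq_trans ij. Qed.

Lemma Wall v : X v -> exists i, W i v.
Proof. by move=> /Xe [j [Dj <-]]; exists j.+1, j. Qed.

Lemma memv2 (a b : V) p q : p *: a + q *: b \in <<[:: a; b]>>%VS.
Proof.
by apply: rpredD; apply: rpredZ; apply: memv_span; rewrite !inE eqxx ?orbT.
Qed.

Lemma full_mem F (a b v : V) : full X F -> F a -> F b -> X v ->
  v \in <<[:: a; b]>>%VS -> F v.
Proof.
move=> fF Fa Fb Xv vin.
have : (X `&` [set v | v \in <<[:: a; b]>>%VS]) v by [].
by rewrite -(fF a b Fa Fb) => -[].
Qed.

Lemma lemA i (E : set V) : biclosed_in (W i) E -> forall a b c d g,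
  W i a -> W i b -> ~ E a -> ~ E b -> E c -> E d -> X g ->
  nspan [set a; b] g -> nspan [set c; d] g -> False.
Proof.
move=> bE a b c d g Wa Wb Na Nb Ec Ed Xg Hab Hcd.
have [EW _] := bE.
case: suitX => _ s2.
have [F [FX [fF [Fc [Fd [Fa cl]]]]]] := s2 i c d a (EW _ Ec) (EW _ Ed) Wa.
have Fg : F g.
  move: Hcd => /nspan2P [p [q [_ [_ gE]]]].
  by apply: (full_mem fF Fc Fd Xg); rewrite gE memv2.
set B' := E `&` (F `&` W i).
have bB' : biclosed_in (F `&` W i) B' by apply: bic_restrict bE _ => v [].
have := cl B' bB'; rewrite /weakly_separable => ws.
have H1 : nspan B' g.
  by apply: (nspan2_sub _ _ Hcd); split=> //; split=> //; exact: EW.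
have H2 : nspan ((F `&` W i) `\` B') g.
  have FWa : ((F `&` W i) `\` B') a.
    by split; [split|move=> [Ea _]; exact: Na].
  move: Hab => /nspan2P [p [q [p0 [q0 gE]]]].
  have [q00|qn] := eqVneq q 0.
    apply: (nspan2_sub (a := a) (b := a)) => //.
    by rewrite gE q00 scale0r addr0; apply: nspan11.
  have Fb : F b.
    apply: (full_mem fF Fa Fg (WX Wb)).
    have -> : b = (- (p / q)) *: a + q^-1 *: g.
      by rewrite gE scalerDr !scalerA mulVf // scale1r scaleNr mulrC addrA addNr add0r.
    exact: memv2.
  apply: (nspan2_sub (a := a) (b := b)) => //.
    by split; [split|move=> [Eb _]; exact: Nb].
  by apply/nspan2P; exists p, q.
have : (nspan B' `&` nspan ((F `&` W i) `\` B')) g by split.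
by rewrite ws => g0; apply: X0; rewrite -g0.
Qed.

Definition Gc (E : set V) (gam : V) :=
  U gam \/ exists c d, E c /\ E d /\ nspan [set c; d] gam.

Lemma lemB i E gam : biclosed_in (W i) E -> U `&` W i `<=` E -> X gam ->
  Gc E gam -> forall a b, W i a -> W i b -> ~ E a -> ~ E b ->
  ~ nspan [set a; b] gam.
Proof.
move=> bE UE Xg [Ug|[c [d [Ec [Ed Hcd]]]]] a b Wa Wb Na Nb Hab.
  have [Y [[_ [_ ccY]] [Yg YU]]] := HU Ug.
  have NYa : ~ Y a by move=> Ya; apply: Na; apply: UE; split=> //; exact: YU.
  have NYb : ~ Y b by move=> Yb; apply: Nb; apply: UE; split=> //; exact: YU.
  by have [_] := ccY a b gam (conj (WX Wa) NYa) (conj (WX Wb) NYb) Hab Xg.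
exact: (lemA bE Wa Wb Na Nb Ec Ed Xg Hab Hcd).
Qed.

Lemma lemC i E gam g : biclosed_in (W i) E -> U `&` W i `<=` E -> Gc E gam ->
  W i g -> nspan [set gam; gam] g -> E g.
Proof.
move=> [EW [cE _]] UE [Ug|[c [d [Ec [Ed Hcd]]]]] Wg Hg.
  have [Y [[_ [cY _]] [Yg YU]]] := HU Ug.
  by apply: UE; split=> //; apply: YU; exact: (cY _ _ _ Yg Yg Hg (WX Wg)).
apply: (cE c d g Ec Ed _ Wg).
move: Hg => /nspan2P [p [q [p0 [q0 ->]]]]; rewrite -scalerDl.
by apply: nspan2_scale => //; rewrite addr_ge0.
Qed.

Lemma plane i gam y g : X gam -> ~ W i gam -> W i y -> W i g -> y <> g ->
  nspan [set gam; y] g ->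
  (exists k, gam = k *: y) \/
  exists al be, W i al /\ W i be /\ nspan [set al; be] gam /\
    nspan [set al; be] y /\ nspan [set al; be] g.
Proof.
move=> Xgam nWgam Wy Wg yg Hg.
have gamg : gam <> g by move=> E; apply: nWgam; rewrite E.
case: (boolP (free [:: gam; y])) => [fr|].
  right.
  set L := <<[:: gam; y]>>%VS.
  set Y := X `&` [set v | v \in L].
  have Ygam : Y gam by split=> //; apply: memv_span; rewrite !inE eqxx.
  have Yy : Y y by split; [exact: (WX Wy)|]; apply: memv_span; rewrite !inE eqxx ?orbT.
  have Yg : Y g.
    split; first exact: (WX Wg).
    by move: Hg => /nspan2P [p [q [_ [_ ->]]]]; rewrite /= memv2.
  have tY : two_dim_linear_subset X Y.
    exists L; split; first by rewrite (eqP fr).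
    by split=> //; exists gam, y.
  have [al [be [Yal [Ybe [Ysub [nfa nfb]]]]]] := fundX tY.
  have nfg : nspan (Y `\ g) g.
    by apply: (nspan2_sub _ _ Hg); [split=> //; exact: gamg | split=> //; exact: yg].
  have [k [Dk ek]] : exists k, D k /\ (k < i)%N /\ g = e k.
    by case: Wg => k [Dk [ki ->]]; exists k.
  case: ek => ki ek.
  have gal : g <> al by move=> E; apply: nfa; rewrite -E.
  have gbe : g <> be by move=> E; apply: nfb; rewrite -E.
  have Wf : forall f, f = al \/ f = be -> W i f.
    move=> f hf.
    have Yf : Y f by case: hf => ->.
    have [j [Dj ej]] := Xe (proj1 Yf).
    case: suitX => s1 _.
    have fd : fundamental Y al be by [].
    exists j; split=> //; split; last by rewrite ej.
    apply: (@ltn_trans k) => //.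
    apply: (s1 Y al be tY fd j k Dj Dk); rewrite ?ej -?ek //.
  exists al, be; split; first by apply: Wf; left.
  split; first by apply: Wf; right.
  by split; [exact: Ysub|split; exact: Ysub].
rewrite free_cons seq1_free negb_and negbK => /orP [|y0].
  by rewrite span_seq1 => /vlineP [k ->]; left; exists k.
by exfalso; apply: X0; move/negPn/eqP: y0 => <-; exact: (WX Wy).
Qed.
Lemma core1 i E gam y g : biclosed_in (W i) E -> U `&` W i `<=` E -> X gam ->
  ~ W i gam -> Gc E gam -> E y -> W i g -> ~ E g -> nspan [set gam; y] g -> False.
Proof.
move=> bE UE Xgam nWgam G Ey Wg nEg Hg.
have [EW [cE ccE]] := bE.
have yg : y <> g by move=> E'; apply: nEg; rewrite -E'.
have g0 : g != 0 by apply/eqP => E'; apply: X0; rewrite -E'; exact: (WX Wg).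
have Hg' := Hg.
move: Hg' => /nspan2P [s [t [s0 [t0 gE]]]].
case: (plane Xgam nWgam (EW _ Ey) Wg yg Hg) =>
  [[k gk]|[al [be [Wal [Wbe [Hgam [Hy Hgg]]]]]]].
  have g0' : s *: gam + t *: y != 0 by rewrite -gE.
  case: (depcase s0 t0 gk g0') => [[H _]|[H _]]; rewrite -gE in H.
    by apply: nEg; apply: (cE y y _ Ey Ey H Wg).
  by apply: nEg; apply: (lemC bE UE G Wg H).
case: (pselect (E al)) => Eal; case: (pselect (E be)) => Ebe.
- by apply: nEg; exact: (cE al be g Eal Ebe Hgg Wg).
- case: (coneG (nspan2C Hgam) (nspan2C Hy) s0 t0) => H; rewrite -gE in H.
    exact: (lemB bE UE Xgam G Wbe Wg Ebe nEg H).
  exact: nEg (cE y al g Ey Eal H Wg).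
- case: (coneG Hgam Hy s0 t0) => H; rewrite -gE in H.
    exact: (lemB bE UE Xgam G Wal Wg Eal nEg H).
  exact: nEg (cE y be g Ey Ebe H Wg).
- exact: (lemB bE UE Xgam G Wal Wbe Eal Ebe Hgam).
Qed.

Lemma core2 i E gam b g : biclosed_in (W i) E -> X gam ->
  ~ W i gam -> ~ Gc E gam -> W i b -> ~ E b -> E g -> W i g ->
  nspan [set gam; b] g -> False.
Proof.
move=> bE Xgam nWgam nG Wb nEb Eg Wg Hg.
have [EW [cE ccE]] := bE.
have bg : b <> g by move=> E'; apply: nEb; rewrite E'.
have g0 : g != 0 by apply/eqP => E'; apply: X0; rewrite -E'; exact: (WX Wg).
have Hg' := Hg.
move: Hg' => /nspan2P [s [t [s0 [t0 gE]]]].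
case: (plane Xgam nWgam Wb Wg bg Hg) =>
  [[k gk]|[al [be [Wal [Wbe [Hgam [Hy Hgg]]]]]]].
  have g0' : s *: gam + t *: b != 0 by rewrite -gE.
  case: (depcase s0 t0 gk g0') => [[_ H]|[_ H]]; rewrite -gE in H.
    by apply: nEb; apply: (cE g g _ Eg Eg H Wb).
  by apply: nG; right; exists g, g.
case: (pselect (E al)) => Eal; case: (pselect (E be)) => Ebe.
- by apply: nG; right; exists al, be.
- case: (coneG Hgam Hy s0 t0) => H; rewrite -gE in H.
    by apply: nG; right; exists al, g.
  by have [_] := ccE b be g (conj Wb nEb) (conj Wbe Ebe) H Wg.
- case: (coneG (nspan2C Hgam) (nspan2C Hy) s0 t0) => H; rewrite -gE in H.
    by apply: nG; right; exists be, g.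
  by have [_] := ccE b al g (conj Wb nEb) (conj Wal Eal) H Wg.
- by have [_] := ccE al be g (conj Wal Eal) (conj Wbe Ebe) Hgg Wg.
Qed.

Fixpoint Eseq (i : nat) : set V :=
  if i is i'.+1 then
    (fun v => Eseq i' v \/ (v = e i' /\ D i' /\ Gc (Eseq i') (e i')))
  else set0.

Lemma step i : biclosed_in (W i) (Eseq i) -> U `&` W i `<=` Eseq i ->
  biclosed_in (W i.+1) (Eseq i.+1) /\ U `&` W i.+1 `<=` Eseq i.+1.
Proof.
move=> bE UE; have [EW [cE ccE]] := bE.
split; last first.
  move=> v [Uv /WS [Wv|[Di ev]]]; first by left; exact: UE.
  by right; split=> //; split=> //; left; rewrite -ev.
case: (pselect (D i)) => Di; last first.
  have eW' : W i.+1 = W i.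
    apply/funext => v; apply/propext; rewrite WS.
    by split=> [[//|[/Di []]]|?]; left.
  have eE : Eseq i.+1 = Eseq i.
    by apply/funext => v; apply/propext; split=> [[//|[_ [/Di []]]]|?]; left.
  by rewrite eW' eE.
have Xgam := eX Di; have nWgam := eW Di.
have nEgam : ~ Eseq i (e i) by move/EW.
split.
  by move=> v [Ev|[-> _]]; apply/WS; [left; exact: EW | right].
split.
  move=> x y g Hx Hy Hg /WS [Wg|[_ gE]].
    left; case: (pselect (Eseq i g)) => // nEg; exfalso.
    case: Hx => [Ex|[xE [_ Gx]]]; case: Hy => [Ey|[yE [_ Gy]]].
    - exact: nEg (cE x y g Ex Ey Hg Wg).
    - rewrite yE in Hg.
      exact: (core1 bE UE Xgam nWgam Gy Ex Wg nEg (nspan2C Hg)).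
    - rewrite xE in Hg; exact: (core1 bE UE Xgam nWgam Gx Ey Wg nEg Hg).
    - rewrite xE yE in Hg; exact: nEg (lemC bE UE Gx Wg Hg).
  right; split=> //; split=> //.
  case: Hx => [Ex|[_ [_ Gx]]]; last exact: Gx.
  case: Hy => [Ey|[_ [_ Gy]]]; last exact: Gy.
  by right; exists x, y; rewrite -gE.
move=> a b g [Wa' nEa'] [Wb' nEb'] Hg Wg'; split=> // Eg'.
have fa : (W i a /\ ~ Eseq i a) \/ (a = e i /\ ~ Gc (Eseq i) (e i)).
  case/WS: Wa' => [Wa|[_ ea]].
    by left; split=> // Ea; apply: nEa'; left.
  by right; split=> // G; apply: nEa'; right; rewrite ea.
have fb : (W i b /\ ~ Eseq i b) \/ (b = e i /\ ~ Gc (Eseq i) (e i)).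
  case/WS: Wb' => [Wb|[_ eb]].
    by left; split=> // Eb; apply: nEb'; left.
  by right; split=> // G; apply: nEb'; right; rewrite eb.
case/WS: Wg' => [Wg|[_ gE]].
  have Eg : Eseq i g.
    by case: Eg' => // -[gE _]; exfalso; apply: nWgam; rewrite -gE.
  have g0 : g != 0 by apply/eqP => E'; apply: X0; rewrite -E'; exact: (WX Wg).
  case: fa => [[Wa nEa]|[ea nG]]; case: fb => [[Wb nEb]|[eb nG']].
  - by have [_] := ccE a b g (conj Wa nEa) (conj Wb nEb) Hg Wg.
  - rewrite eb in Hg.
    exact: (core2 bE Xgam nWgam nG' Wa nEa Eg Wg (nspan2C Hg)).
  - rewrite ea in Hg; exact: (core2 bE Xgam nWgam nG Wb nEb Eg Wg Hg).
  - rewrite ea eb in Hg; apply: nG; right; exists g, g; split=> //; split=> //.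
    exact: nspan11_inv Hg g0.
have G : Gc (Eseq i) (e i).
  by case: Eg' => [Eg|[_ [_ G]]] //; exfalso; apply: nEgam; rewrite -gE.
case: fa => [[Wa nEa]|[_ nG]]; last exact: nG G.
case: fb => [[Wb nEb]|[_ nG]]; last exact: nG G.
by apply: (lemB bE UE Xgam G Wa Wb nEa nEb); rewrite -gE.
Qed.

Lemma inv i : biclosed_in (W i) (Eseq i) /\ U `&` W i `<=` Eseq i.
Proof.
elim: i => [|i [bE UE]]; last exact: step.
split; last by move=> v [_ [j [_ [//]]]].
split; first by move=> v.
split; first by move=> a b g [].
by move=> a b g [[j [_ [//]]]].
Qed.

Lemma Eseq_cl i : U `<=` X -> Eseq i `<=` closure_in X U.
Proof.
move=> UX; elim: i => [//|i IH] v [Ev|[-> [Di [Ug|[c [d [Ec [Ed Hcd]]]]]]]].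
- exact: IH.
- exact: cl_ext.
- exact: (cl_closed (IH _ Ec) (IH _ Ed) Hcd (eX Di)).
Qed.

Lemma Eseq_mono i j : (i <= j)%N -> Eseq i `<=` Eseq j.
Proof.
move=> ij; elim: j ij => [|j IH]; first by rewrite leqn0 => /eqP ->.
rewrite leq_eqVlt => /orP [/eqP -> //|]; rewrite ltnS => ij v Ev; left; exact: IH.
Qed.

Lemma join_bic0 : U `<=` X -> biclosed_in X (closure_in X U).
Proof.
move=> UX.
have sub : closure_in X U `<=` [set v | exists i, Eseq i v].
  apply: cl_min.
  - by move=> v [i Ev]; apply: (WX (i := i)); have [[EW _] _] := inv i; exact: EW.
  - move=> v Uv; have [i Wv] := Wall (UX _ Uv); exists i.
    by have [_ UE] := inv i; apply: UE.
  - move=> a b g [i Ea] [j Eb] Hg Xg; have [k Wg] := Wall Xg.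
    set m := maxn (maxn i j) k; exists m.
    have [[_ [cE _]] _] := inv m.
    apply: (cE a b g).
    + by apply: (Eseq_mono _ Ea); rewrite /m leq_max leq_max leqnn.
    + by apply: (Eseq_mono _ Eb); rewrite /m leq_max leq_max leqnn orbT.
    + exact: Hg.
    + by apply: (Wmono _ Wg); rewrite /m leq_max leqnn orbT.
split; first exact: cl_sub.
split; first exact: cl_closed.
move=> a b g [Xa nCa] [Xb nCb] Hg Xg; split=> // Cg.
have [i Eg] := sub _ Cg.
have [ja Wa] := Wall Xa; have [jb Wb] := Wall Xb.
set m := maxn (maxn ja jb) i.
have [[_ [_ ccE]] _] := inv m.
have Wa' : W m a by apply: (Wmono _ Wa); rewrite /m leq_max leq_max leqnn.
have Wb' : W m b by apply: (Wmono _ Wb); rewrite /m leq_max leq_max leqnn orbT.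
have nEa : ~ Eseq m a by move=> Ea; apply: nCa; exact: Eseq_cl Ea.
have nEb : ~ Eseq m b by move=> Eb; apply: nCb; exact: Eseq_cl Eb.
have Emg : Eseq m g by apply: (Eseq_mono _ Eg); rewrite /m leq_max leqnn orbT.
have Wmg : W m g by have [[EW _] _] := inv m; exact: EW.
by have [_] := ccE a b g (conj Wa' nEa) (conj Wb' nEb) Hg Wmg.
Qed.
End Main.
Lemma join_bic (R : realType) (n : nat) (X : set 'rV[R]_n) (e : nat -> 'rV[R]_n)
  (D : set nat) :
  enumeration X e D ->
  (forall Y, two_dim_linear_subset X Y -> exists a b, fundamental Y a b) ->
  suitable X e D -> forall U : set 'rV[R]_n, U `<=` X ->
  (forall u, U u -> exists Y, biclosed_in X Y /\ Y u /\ Y `<=` U) ->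
  biclosed_in X (closure_in X U).
Proof.
move=> enumX fundX suitX U UX HU.
case: (pselect (X 0)) => X0; last exact: (join_bic0 enumX fundX suitX X0 HU).
case: (pselect (exists u, U u)) => [[u Uu]|nU].
  have [Y [[YX [cY ccY]] [Yu YU]]] := HU u Uu.
  have n0 : forall w : 'rV[R]_n, nspan [set w; w] 0.
    by move=> w; have := nspan11 w (lexx 0); rewrite scale0r.
  have XU : X `<=` U.
    move=> v Xv; apply: YU; apply: contrapT => nYv.
    have Y0 : Y 0 := cY u u 0 Yu Yu (n0 u) X0.
    by have [_] := ccY v v 0 (conj Xv nYv) (conj Xv nYv) (n0 v) X0.
  split; first exact: cl_sub.
  split; first exact: cl_closed.
  by move=> a b g [Xa nCa]; exfalso; apply: nCa; apply: cl_ext; exact: XU.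
have C0 : closure_in X U `<=` set0.
  apply: cl_min.
  - by move=> v.
  - by move=> v Uv; apply: nU; exists v.
  - by move=> a b g.
split; first exact: cl_sub.
split; first exact: cl_closed.
by move=> a b g _ _ _ Xg; split=> // /C0.
Qed.

Unset Implicit Arguments.
Theorem theorem4p1 (R : realType) (n : nat) (X : set 'rV[R]_n)
  (e : nat -> 'rV[R]_n) (D : set nat) :
  enumeration X e D ->
  (forall Y, two_dim_linear_subset X Y -> exists a b, fundamental Y a b) ->
  suitable X e D ->
  forall XX : set (set 'rV[R]_n), (forall Y, XX Y -> biclosed_in X Y) ->
    (* join = closure of the union: biclosed, upper bound, least *)
    (biclosed_in X (closure_in X (\bigcup_(Y in XX) Y)) /\
     (forall Y, XX Y -> Y `<=` closure_in X (\bigcup_(Y in XX) Y)) /\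
     (forall Z, biclosed_in X Z -> (forall Y, XX Y -> Y `<=` Z) ->
        closure_in X (\bigcup_(Y in XX) Y) `<=` Z)) /\
    (* meet = interior of the intersection: biclosed, lower bound, greatest *)
    (biclosed_in X (interior_in X (\bigcap_(Y in XX) Y)) /\
     (forall Y, XX Y -> interior_in X (\bigcap_(Y in XX) Y) `<=` Y) /\
     (forall Z, biclosed_in X Z -> (forall Y, XX Y -> Z `<=` Y) ->
        Z `<=` interior_in X (\bigcap_(Y in XX) Y))).
Proof.
move=> enumX fundX suitX XX HXX.
set U := \bigcup_(Y in XX) Y.
have UX : U `<=` X by move=> v [Y XXY Yv]; have [YX _] := HXX Y XXY; exact: YX.
have HU : forall u, U u -> exists Y, biclosed_in X Y /\ Y u /\ Y `<=` U.
  move=> u [Y XXY Yu]; exists Y; split; first exact: HXX.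
  by split=> // v Yv; exists Y.
set U' := X `\` \bigcap_(Y in XX) Y.
have U'X : U' `<=` X by move=> v [].
have HU' : forall u, U' u -> exists Y, biclosed_in X Y /\ Y u /\ Y `<=` U'.
  move=> u [Xu nI].
  have [Y [XXY nYu]] : exists Y, XX Y /\ ~ Y u.
    apply: contrapT => H; apply: nI => Y XXY; apply: contrapT => nY.
    by apply: H; exists Y.
  exists (X `\` Y); split; first exact: bic_compl (HXX Y XXY).
  split=> // v [Xv nYv]; split=> // I; apply: nYv; exact: I Y XXY.
have bJ := join_bic enumX fundX suitX UX HU.
have bM := join_bic enumX fundX suitX U'X HU'.
split.
  split; first exact: bJ.
  split.
    by move=> Y XXY v Yv; apply: cl_ext; exists Y.
  move=> Z [ZX [cZ _]] HZ; apply: cl_min => // v [Y XXY Yv]; exact: HZ Y XXY v Yv.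
rewrite /interior_in.
split; first exact: bic_compl bM.
split.
  move=> Y XXY v [Xv nC]; apply: contrapT => nYv; apply: nC; apply: cl_ext.
  by split=> // I; exact: nYv (I Y XXY).
move=> Z bZ HZ v Zv; have [ZX [_ ccZ]] := bZ.
split; first exact: ZX.
move=> Cv.
have h1 : X `\` Z `<=` X by move=> w [].
have h2 : U' `<=` X `\` Z.
  move=> w [Xw nI]; split=> // Zw; apply: nI => Y XXY; exact: HZ Y XXY w Zw.
by have [_] := (cl_min h1 h2 ccZ) v Cv.
Qed.
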